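(* Let $\rho\in(0,1)$, $\gamma>0$, $T>0$, and let $0<\lambda_1\le\lambda_2\le\cdots$ be positive numbers. Then for all $t\in[0,T]$ and $k\ge1$, $$A_{\rho}(\lambda_k,t)\ge C(\rho,\gamma,\lambda_1)>0,\qquad C(\rho,\gamma,\lambda_1)=\frac{\gamma\sin\rho\pi}{3\pi}\int_0^{\infty}\frac{r^{\rho-1}e^{-rT}}{\frac{r^2}{\lambda_1^2}+\gamma^2r^{2\rho}+1}dr,$$ where $A_{\rho}(\lambda,t)=\frac{\gamma}{\pi}\int_0^{\infty}e^{-rt}\frac{\lambda^2r^{\rho-1}\sin\rho\pi}{(-r+\lambda\gamma r^{\rho}\cos\rho\pi+\lambda)^2+(\lambda\gamma r^{\rho}\sin\rho\pi)^2}dr$.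
   Context: In the paper the $\lambda_k$ are the eigenvalues, arranged non-decreasingly, of a positive self-adjoint operator with compact resolvent on a separable Hilbert space. *)

(* Defs.v *)
From HB Require Import structures.
From mathcomp Require Import all_boot all_order all_algebra.
From mathcomp Require Import all_classical all_reals all_analysis.
Set Implicit Arguments. Unset Strict Implicit. Unset Printing Implicit Defensive.
Import Order.TTheory GRing.Theory Num.Theory.
Import numFieldNormedType.Exports.
Local Open Scope classical_set_scope.
Local Open Scope ring_scope.

Definition A_integrand (R : realType) (rho gamma lam t r : R) : R :=
  expR (- (r * t)) *
  (lam ^+ 2 * powR r (rho - 1) * sin (rho * pi)) /
  ((- r + lam * gamma * powR r rho * cos (rho * pi) + lam) ^+ 2
    + (lam * gamma * powR r rho * sin (rho * pi)) ^+ 2).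

(* A_rho(lambda,t) = gamma/pi * int_0^oo ... dr  (extended-real valued;
   the integrand is nonnegative so the Lebesgue integral is well defined). *)
Definition A_rho (R : realType) (rho gamma lam t : R) : \bar R :=
  ((gamma / pi)%:E *
   \int[lebesgue_measure]_(r in `]0%R, +oo[) (A_integrand rho gamma lam t r)%:E)%E.

Definition C_integrand (R : realType) (rho gamma lam1 T r : R) : R :=
  powR r (rho - 1) * expR (- (r * T)) /
  (r ^+ 2 / lam1 ^+ 2 + gamma ^+ 2 * powR r (2 * rho) + 1).

Definition C_const (R : realType) (rho gamma lam1 T : R) : \bar R :=
  ((gamma * sin (rho * pi) / (3 * pi))%:E *
   \int[lebesgue_measure]_(r in `]0%R, +oo[) (C_integrand rho gamma lam1 T r)%:E)%E.

(* Main.v *)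
Require Import Defs.
From HB Require Import structures.
From mathcomp Require Import all_boot all_order all_algebra.
From mathcomp Require Import all_classical all_reals all_analysis.
From mathcomp Require Import measurable_realfun.
Import Order.TTheory GRing.Theory Num.Theory.
Local Open Scope ring_scope.
From mathcomp Require Import ring lra.

Lemma mexp (R : realType) (t : R) :
  measurable_fun setT (fun r : R => expR (- (r * t))).
Proof.
apply: (measurableT_comp (@measurable_expR R)).
apply: measurable_funN; apply: measurable_funM => //; exact: measurable_cst.
Qed.

Lemma mpow (R : realType) (p : R) : measurable_fun setT (fun r : R => powR r p).
Proof. exact: measurable_powR. Qed.

Lemma mdiv (R : realType) (f g : R -> R) : measurable_fun setT f ->
  measurable_fun setT g -> (forall r, 0 <= g r) ->
  measurable_fun setT (fun r => f r / g r).
Proof.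
move=> mf mg g0.
have -> : (fun r => f r / g r) = (fun r => f r * powR (g r) (-1)).
  by apply/funext => r; rewrite powR_inv1.
apply: measurable_funM => //.
exact: (measurableT_comp (measurable_powR _) mg).
Qed.

Ltac mtac := repeat first [exact: measurable_cst | exact: mpow | exact: mexp
  | exact: measurable_id | apply: measurable_funD | apply: measurable_funM
  | apply: measurable_funN | apply: measurable_funX].

Lemma mC (R : realType) (rho gamma lam T : R) :
  measurable_fun setT (C_integrand rho gamma lam T).
Proof.
rewrite /C_integrand; apply: mdiv; try mtac.
move=> r; apply: addr_ge0 => //; apply: addr_ge0.
  + by apply: mulr_ge0; [exact: sqr_ge0|rewrite invr_ge0 sqr_ge0].
  + by apply: mulr_ge0; [exact: sqr_ge0|exact: powR_ge0].
Qed.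

Lemma mA (R : realType) (rho gamma lam t : R) :
  measurable_fun setT (A_integrand rho gamma lam t).
Proof.
rewrite /A_integrand; apply: mdiv; try mtac.
by move=> r; apply: addr_ge0; exact: sqr_ge0.
Qed.
Lemma core (F : realFieldType) (g s c x p r e1 e2 l1 l pi : F) :
  0 < g -> 0 < s -> c ^+ 2 + s ^+ 2 = 1 -> 0 < x -> 0 <= p -> 0 < r ->
  0 <= e2 -> e2 <= e1 -> 0 < l1 -> l1 <= l -> 0 < pi ->
  g * s / (3 * pi) * (p * e2 / (r ^+ 2 / l1 ^+ 2 + g ^+ 2 * x ^+ 2 + 1)) <=
  g / pi * (e1 * (l ^+ 2 * p * s) /
     ((- r + l * g * x * c + l) ^+ 2 + (l * g * x * s) ^+ 2)).
Proof.
move=> g0 s0 cs x0 p0 r0 e20 e21 l10 l1l pi0.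
set Q := _ + 1; set D := _ + _.
have l0 : 0 < l by apply: lt_le_trans l1l.
have Q1 : 1 <= Q.
  rewrite /Q lerDr; apply: addr_ge0; first by rewrite divr_ge0 // sqr_ge0.
  by apply: mulr_ge0; rewrite sqr_ge0.
have Q0 : 0 < Q by apply: lt_le_trans Q1.
have D0 : 0 < D.
  rewrite /D; apply: ltr_wpDl; first exact: sqr_ge0.
  by rewrite exprn_gt0 // !mulr_gt0.
have hl : r ^+ 2 <= l ^+ 2 * (r ^+ 2 / l1 ^+ 2).
  rewrite mulrA ler_pdivlMr ?exprn_gt0 //.
  rewrite [X in _ <= X]mulrC; apply: ler_wpM2l; first exact: sqr_ge0.
  by rewrite ler_pXn2r // ?nnegrE ltW.
have key : D <= 3 * l ^+ 2 * Q.
  have h1 : D <= 3 * (r ^+ 2 + (l * g * x * c) ^+ 2 + l ^+ 2) + (l * g * x * s) ^+ 2.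
    rewrite /D lerD2r.
    have := sqr_ge0 (r + l * g * x * c); have := sqr_ge0 (r + l);
    have := sqr_ge0 (l * g * x * c - l). nra.
  apply: (le_trans h1).
  have e : (l * g * x * c) ^+ 2 = (l * g * x) ^+ 2 * c ^+ 2 by rewrite exprMn.
  have e' : (l * g * x * s) ^+ 2 = (l * g * x) ^+ 2 * s ^+ 2 by rewrite exprMn.
  rewrite e e' /Q.
  have -> : c ^+ 2 = 1 - s ^+ 2 by rewrite -cs; ring.
  have -> : (l * g * x) ^+ 2 = l ^+ 2 * (g ^+ 2 * x ^+ 2) by rewrite !exprMn; ring.
  have hs : 0 <= l ^+ 2 * (g ^+ 2 * x ^+ 2) * s ^+ 2 by rewrite !mulr_ge0 // ?sqr_ge0 ?exprn_ge0 // ltW.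
  move: hl hs; set u := r ^+ 2 / l1 ^+ 2; set v := g ^+ 2 * x ^+ 2. nra.
have -> : g * s / (3 * pi) * (p * e2 / Q) = (g * p * s / pi) * (e2 / (3 * Q)).
  by field; rewrite ?gt_eqF.
have -> : g / pi * (e1 * (l ^+ 2 * p * s) / D) = (g * p * s / pi) * (e1 * l ^+ 2 / D).
  by field; rewrite ?gt_eqF.
apply: ler_wpM2l; first by rewrite divr_ge0 // ?mulr_ge0 // ltW.
have Q3 : 0 < 3 * Q by rewrite mulr_gt0.
apply: (@le_trans _ _ (e1 / (3 * Q))); first by rewrite ler_wpM2r // invr_ge0 ltW.
rewrite -mulrA; apply: ler_wpM2l; first exact: le_trans e21.
rewrite ler_pdivlMr // -ler_pdivrMl // mulrC ler_pdivrMr //.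
rewrite ler_pdivrMl //; apply: (le_trans key); rewrite le_eqVlt; apply/orP; left.
by apply/eqP; ring.
Qed.

Lemma sin_pos {R : realType} {rho : R} : 0 < rho -> rho < 1 -> 0 < sin (rho * pi).
Proof.
move=> h0 h1; apply: sin_gt0_pi; rewrite mulr_gt0 ?pi_gt0 //=.
by rewrite gtr_pMl ?pi_gt0.
Qed.

Lemma powR2 (R : realType) (r rho : R) : 0 <= r ->
  powR r (2 * rho) = powR r rho ^+ 2.
Proof.
move=> r0; rewrite mulrC powRrM -[2]/(2%:R) powR_mulrn //; exact: powR_ge0.
Qed.

Lemma pointwise (R : realType) (rho gamma lam1 lam t T r : R) :
  0 < rho -> rho < 1 -> 0 < gamma -> 0 < lam1 -> lam1 <= lam ->
  0 <= t -> t <= T -> 0 < r ->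
  gamma * sin (rho * pi) / (3 * pi) * C_integrand rho gamma lam1 T r <=
  gamma / pi * A_integrand rho gamma lam t r.
Proof.
move=> h0 h1 g0 l10 l1l t0 tT r0.
rewrite /C_integrand /A_integrand powR2 ?(ltW r0) //.
apply: core => //.
all: try exact: sin_pos.
all: try exact: cos2Dsin2.
all: try exact: powR_gt0.
all: try exact: powR_ge0.
all: try exact: pi_gt0.
all: try by rewrite ltW // expR_gt0.
all: try by rewrite ler_expR lerN2 ler_wpM2l // ltW.

Qed.

Lemma C_lb (R : realType) (rho gamma lam1 T r : R) :
  0 < rho -> rho < 1 -> 0 < gamma -> 0 < lam1 -> 0 < T -> 1 <= r <= 2 ->
  2^-1 * expR (- (2 * T)) / (4 / lam1 ^+ 2 + gamma ^+ 2 * 4 + 1)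
  <= C_integrand rho gamma lam1 T r.
Proof.
move=> h0 h1 g0 l0 T0 /andP[r1 r2].
have r0 : 0 < r by apply: lt_le_trans r1.
rewrite /C_integrand.
have Qp : 0 < r ^+ 2 / lam1 ^+ 2 + gamma ^+ 2 * r `^ (2 * rho) + 1.
  apply: ltr_wpDl; last exact: ltr01.
  by apply: addr_ge0; apply: mulr_ge0; rewrite ?invr_ge0 ?sqr_ge0 ?powR_ge0.
have Q4 : r ^+ 2 / lam1 ^+ 2 + gamma ^+ 2 * r `^ (2 * rho) + 1 <=
          4 / lam1 ^+ 2 + gamma ^+ 2 * 4 + 1.
  have rr : r ^+ 2 <= 4.
    have -> : (4 : R) = 2 ^+ 2 by rewrite expr2; lra.
    by rewrite ler_pXn2r // ?nnegrE ltW // (lt_le_trans r0).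
  rewrite lerD2r; apply: lerD.
    by apply: ler_wpM2r => //; rewrite invr_ge0 sqr_ge0.
  apply: ler_wpM2l; first exact: sqr_ge0.
  apply: (le_trans _ rr); rewrite -[X in _ <= X]powR_mulrn ?(ltW r0) //.
  by apply: ler_powR => //; rewrite -[2%:R]/2; nra.
have hp : 2^-1 <= r `^ (rho - 1).
  apply: (@le_trans _ _ (r `^ (-1))).
    rewrite powR_inv1 ?(ltW r0) // lef_pV2 ?posrE //; lra.
  by apply: ler_powR => //; lra.
have he : expR (- (2 * T)) <= expR (- (r * T)).
  by rewrite ler_expR lerN2 ler_wpM2r // ltW.
apply: (@le_trans _ _ (2^-1 * expR (- (2 * T)) /
   (r ^+ 2 / lam1 ^+ 2 + gamma ^+ 2 * r `^ (2 * rho) + 1))).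
  apply: ler_wpM2l; first by rewrite mulr_ge0 // ?expR_ge0 // invr_ge0; lra.
  by rewrite lef_pV2 ?posrE // (lt_le_trans Qp).
apply: ler_wpM2r; first by rewrite invr_ge0 ltW.
apply: ler_pM => //.

Qed.

(* lam k represents lambda_{k+1}; so lambda_1 = lam 0. *)
Theorem lemma2p4 (R : realType) (rho gamma T : R) (lam : nat -> R)
  (hrho0 : 0 < rho) (hrho1 : rho < 1) (hgamma : 0 < gamma) (hT : 0 < T)
  (hlam0 : 0 < lam 0%N) (hmono : forall k : nat, lam k <= lam k.+1) :
  (0 < C_const rho gamma (lam 0%N) T)%E /\
  (forall (t : R) (k : nat), 0 <= t -> t <= T ->
     (C_const rho gamma (lam 0%N) T <= A_rho rho gamma (lam k) t)%E).
Proof.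
have s0 := sin_pos hrho0 hrho1 : 0 < sin (rho * pi).
have pi0 : (0 : R) < pi := pi_gt0 R.
have K0 : 0 < gamma * sin (rho * pi) / (3 * pi).
  by rewrite divr_gt0 ?mulr_gt0.
have mD : measurable (`]0%R, +oo[%classic : set R) by exact: measurable_itv.
have mCD : measurable_fun (`]0%R, +oo[%classic : set R)
   (fun r => (C_integrand rho gamma (lam 0%N) T r)%:E).
  by apply/measurable_EFinP; apply: (measurable_funS measurableT) => //; exact: mC.
have C0 : forall r : R, 0 < r -> 0 <= C_integrand rho gamma (lam 0%N) T r.
  move=> r r0; rewrite /C_integrand; apply: divr_ge0.
    by rewrite mulr_ge0 ?powR_ge0 ?expR_ge0.
  by apply: addr_ge0 => //; apply: addr_ge0; apply: mulr_ge0; rewrite ?invr_ge0 ?sqr_ge0 ?powR_ge0.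
split.
  rewrite /C_const; apply: mule_gt0; first by rewrite lte_fin.
  set c := 2^-1 * expR (- (2 * T)) / (4 / lam 0%N ^+ 2 + gamma ^+ 2 * 4 + 1).
  have c0 : 0 < c.
    rewrite /c divr_gt0 ?mulr_gt0 ?expR_gt0 ?invr_gt0 //.
    apply: ltr_wpDl; last exact: ltr01.
    by apply: addr_ge0; apply: mulr_ge0; rewrite ?invr_ge0 ?sqr_ge0 //; lra.
  have m12 : measurable (`[1%R, 2%R]%classic : set R) by exact: measurable_itv.
  apply: (@lt_le_trans _ _ (\int[lebesgue_measure]_(r in `[1%R, 2%R]) (c%:E))%E).
    rewrite (integral_cst lebesgue_measure m12 c%:E).
    have h : lebesgue_measure (`[1%R, 2%R]%classic : set R) = 1%:E.
      rewrite lebesgue_measure_itv /= lte_fin ifT; last lra.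
      by rewrite -EFinD; congr EFin; lra.
    apply: mule_gt0; first by rewrite lte_fin.
    by apply: (eq_ind_r (fun x => (0 < x)%E) _ h); rewrite lte_fin.
  apply: (@le_trans _ _ (\int[lebesgue_measure]_(r in `[1%R, 2%R])
                (C_integrand rho gamma (lam 0%N) T r)%:E)%E).
    apply: ge0_le_integral => //.
    - by move=> x _; rewrite lee_fin ltW.
    - apply: (measurable_funS mD) => // x /=; rewrite !in_itv /= => /andP[x1 _].
      by rewrite andbT; lra.
    - move=> x /=; rewrite in_itv /= => hx; rewrite lee_fin.
      by apply: C_lb => //.
  apply: ge0_subset_integral => //.
  - by move=> x /=; rewrite in_itv /= andbT => x0; rewrite lee_fin C0.
  - by move=> x /=; rewrite !in_itv /= => /andP[x1 _]; rewrite andbT; lra.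
move=> t k t0 tT.
have lk : lam 0%N <= lam k.
  elim: k => [|k IH] //; exact: le_trans (hmono k).
rewrite /C_const /A_rho -ge0_integralZl_EFin //; last 2 first.
  by move=> x /=; rewrite in_itv /= andbT => x0; rewrite lee_fin C0.
  exact: ltW.
rewrite -ge0_integralZl_EFin //; last 3 first.
  move=> x /=; rewrite in_itv /= andbT => x0; rewrite lee_fin.
  rewrite -(@pmulr_rge0 _ (gamma / pi)) ?divr_gt0 //.
  have hp := @pointwise _ _ _ _ _ _ _ _ hrho0 hrho1 hgamma hlam0 lk t0 tT x0.
  apply: le_trans hp.
  by apply: mulr_ge0; [exact: ltW | exact: C0].
  by apply/measurable_EFinP; apply: (measurable_funS measurableT) => //; exact: mA.
  by rewrite divr_ge0 // ltW.
apply: ge0_le_integral => //.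
- move=> x /=; rewrite in_itv /= andbT => x0.
  by rewrite -EFinM lee_fin; apply: mulr_ge0; [exact: ltW | exact: C0].
- apply/measurable_EFinP => /=; apply: measurable_funM; first exact: measurable_cst.
  by apply/measurable_EFinP.
- apply/measurable_EFinP => /=; apply: measurable_funM; first exact: measurable_cst.
  apply: (measurable_funS measurableT) => //; exact: mA.
- move=> x /=; rewrite in_itv /= andbT => x0.
  rewrite -!EFinM lee_fin; exact: pointwise.
Qed.
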